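(* Let $\mathscr T$ be a functor satisfying (T1)–(T4), and let $\Gamma$, $\Psi$ be as described below. For each $\mathscr T$-based orthomodular dynamic algebra $\mathfrak K$ and $k\in K$, let $S_k\subseteq\mathscr T(K)$ be the unique subset with $k=\bigsqcup S_k$, and define $\lambda_{\mathfrak K}\colon K\to\mathscr P(\mathscr T(\mathbf{Lin}(\widetilde{\mathfrak K})))$ by $\lambda_{\mathfrak K}(k)=\{\nu_{\mathfrak K}(s)\mid s\in S_k\}$, where $\nu_{\mathfrak K}(s)=s\bullet(-)\colon\widetilde K\to\widetilde K$. Then $\lambda=(\lambda_{\mathfrak K})_{\mathfrak K}$ is a natural isomorphism $1_{\mathscr T\mathbb{ODA}}\Rightarrow\Gamma\circ\Psi$.
   Context: $\Gamma(\mathcal M)=\mathscr P(\mathscr T(\mathbf{Lin}(\mathcal M)))$, $\Gamma(k)(A)=\{k\circ a\circ k^{-1}\mid a\in A\}$; $\Psi(\mathfrak K)=(\widetilde K,\preceq,{}^\perp)$, $\Psi(\phi)=\phi|_{\widetilde K}$. (The existence and uniqueness of $S_k$ holds for $\mathscr T$-based orthomodular dynamic algebras.) An involutive unital quantale is $(Q,\bigsqcup,\odot,{}^*,e)$: complete join-semilattice $Q$, associative $\odot$ distributing over arbitrary joins in each argument, unit $e$, ${}^*$ with $x^{**}=x$, $(x\odot y)^*=y^*\odot x^*$, $(\bigsqcup x_i)^*=\bigsqcup x_i^*$. An involutive generalized dynamic algebra (IDA) is such a quantale with ${\sim}\colon K\to K$ satisfying, for all $x,y$ and families $(x_i)$: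 ${\sim}(x\odot{\sim}{\sim}y)={\sim}(x\odot y)$; ${\sim}(\bigsqcup{\sim}{\sim}x_i)={\sim}(\bigsqcup x_i)$; $({\sim}x)^*={\sim}x$; ${\sim}{\sim}({\sim}{\sim}x\odot y)={\sim}({\sim}x\sqcup{\sim}({\sim}x\sqcup y))$. Test set $\widetilde K=\{{\sim}k\}$; $\bigvee W={\sim}{\sim}\bigsqcup W$; $w^\perp={\sim}w$; $k\preceq l$ iff $\bigvee\{k,l\}=l$; $k\bullet v={\sim}{\sim}(k\odot v)$; $k\equiv l$ iff $k\bullet w=l\bullet w$ for all $w\in\widetilde K$. IDA morphisms preserve arbitrary joins, $\odot$, ${}^*$, unit, ${\sim}$ (category $\mathbb{IDA}$); semi-Foulis means $(\widetilde K,\preceq,{}^\perp)$ is a complete orthomodular lattice. $\mathbb{IM}$: involutive monoids and homomorphisms. For a complete orthomodular lattice $\mathcal M$: $\pi_m(x)=m\wedge(m^\perp\vee x)$; $\mathbf{Lin}(\mathcal M)$ is the set of maps $f$ admitting $f^*$ with $f(x)\le y^\perp\iff x\le f^*(y)^\perp$, an IDA under pointwise joins, composition, ${}^*$, $\mathrm{id}$, ${\sim}f=\pi_{f(1)^\perp}$. For an involutive submonoid $L\supseteq\{\pi_m\}$, $\mathscr P(L)$ is the IDA of subsets of $L$ with union, setwise composition and involution, unit $\{\mathrm{id}\}$, ${\sim}A=\{\pi_{(\bigvee_{a\in A}a(1))^\perp}\}$. $\mathscr T\colon\mathbb{IDA}\to\mathbb{IM}$ satisfies: (T1) $\widetilde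 K\subseteq\mathscr T(K)\subseteq K$, $\mathscr T(K)$ an involutive submonoid; (T2) for semi-Foulis $\mathfrak K$ with $s=t\iff s\equiv t$ on $\mathscr T(K)$, $\nu_{\mathfrak K}\colon k\mapsto k\bullet(-)$ is an isomorphism $\mathscr T(\mathfrak K)\to\mathscr T(\mathbf{Lin}(\widetilde{\mathfrak K}))$; (T3) $f\mapsto\{f\}$ is an isomorphism $\mathscr T(\mathbf{Lin}(\mathcal M))\to\mathscr T(\mathscr P(\mathscr T(\mathbf{Lin}(\mathcal M))))$; (T4) $\mathscr T(f)$ is the restriction of $f$. A $\mathscr T$-based orthomodular dynamic algebra is an IDA with: (TODA1) $(\widetilde K,\preceq,{}^\perp)$ a complete orthomodular lattice; (TODA2) every $A$ with $\mathscr T(K)\subseteq A\subseteq K$ closed under $\odot$, ${}^*$, arbitrary joins equals $K$; (TODA3) for $S,T\subseteq\mathscr T(K)$, $\bigsqcup S=\bigsqcup T$ iff $S=T$; (TODA4) for $s,t\in\mathscr T(K)$, $s=t$ iff $s\equiv t$. $\mathscr T\mathbb{ODA}$: these objects with bijective IDA morphisms. $\mathbb{COL}$: complete orthomodular lattices with ortholattice isomorphisms. *)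

(* Defs.v *)
From Stdlib Require Import ClassicalEpsilon.


Definition is_lub {T : Type} (le : T -> T -> Prop) (W : T -> Prop) (x : T) : Prop :=
  (forall w, W w -> le w x) /\ (forall y, (forall w, W w -> le w y) -> le x y).

Definition is_partial_order {T : Type} (le : T -> T -> Prop) : Prop :=
  (forall x, le x x) /\ (forall x y, le x y -> le y x -> x = y) /\
  (forall x y z, le x y -> le y z -> le x z).

Definition bijective {A B : Type} (f : A -> B) : Prop :=
  exists g : B -> A, (forall x, g (f x) = x) /\ (forall y, f (g y) = y).

Record COLsig := {
  ccar :> Type;
  cle : ccar -> ccar -> Prop;
  cperp : ccar -> ccar;
  csup : (ccar -> Prop) -> ccar }.

Section COLops.
Context {M : COLsig}.
Definition cjoin2 (x y : M) : M := csup M (fun z => z = x \/ z = y).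
Definition cmeet2 (x y : M) : M := csup M (fun z => cle M z x /\ cle M z y).
Definition cbot : M := csup M (fun _ => False).
Definition ctop : M := csup M (fun _ => True).
Definition pi_ (m : M) (x : M) : M := cmeet2 m (cjoin2 (cperp M m) x).
End COLops.

Definition isCOL (M : COLsig) : Prop :=
  is_partial_order (cle M) /\
  (forall W : M -> Prop, is_lub (cle M) W (csup M W)) /\
  (forall x : M, cperp M (cperp M x) = x) /\
  (forall x y : M, cle M x y -> cle M (cperp M y) (cperp M x)) /\
  (forall x : M, cmeet2 x (cperp M x) = @cbot M) /\
  (forall x : M, cjoin2 x (cperp M x) = @ctop M) /\
  (forall x y : M, cle M x y -> y = cjoin2 x (cmeet2 y (cperp M x))).

Definition is_OL_iso {M N : COLsig} (k : M -> N) : Prop :=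
  bijective k /\
  (forall x y, cle M x y <-> cle N (k x) (k y)) /\
  (forall x, k (cperp M x) = cperp N (k x)).

Record IDAsig := {
  car :> Type;
  ijoin : (car -> Prop) -> car;
  imul : car -> car -> car;
  istar : car -> car;
  iunit : car;
  isim : car -> car }.

Section IDAops.
Context {K : IDAsig}.
Definition pair2 (x y : K) : K -> Prop := fun z => z = x \/ z = y.
Definition ijoin2 (x y : K) : K := ijoin K (pair2 x y).
Definition ile (x y : K) : Prop := ijoin2 x y = y.
Definition image {A B : Type} (f : A -> B) (W : A -> Prop) : B -> Prop :=
  fun b => exists a, W a /\ b = f a.

Definition test (k : K) : Prop := exists l : K, k = isim K l.
Definition TestT : Type := { k : K | test k }.
Definition vee (W : K -> Prop) : K := isim K (isim K (ijoin K W)).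
Definition dot (k v : K) : K := isim K (isim K (imul K k v)).
Definition tle (k l : K) : Prop := vee (pair2 k l) = l.
Definition equivK (k l : K) : Prop := forall w : K, test w -> dot k w = dot l w.
End IDAops.
Arguments TestT : clear implicits.

Definition is_IDA (K : IDAsig) : Prop :=
  is_partial_order (@ile K) /\
  (forall W : K -> Prop, is_lub (@ile K) W (ijoin K W)) /\
  (forall x y z : K, imul K x (imul K y z) = imul K (imul K x y) z) /\
  (forall x : K, imul K (iunit K) x = x) /\
  (forall x : K, imul K x (iunit K) = x) /\
  (forall (x : K) W, imul K x (ijoin K W) = ijoin K (image (imul K x) W)) /\
  (forall (x : K) W, imul K (ijoin K W) x = ijoin K (image (fun y => imul K y x) W)) /\
  (forall x : K, istar K (istar K x) = x) /\
  (forall x y : K, istar K (imul K x y) = imul K (istar K y) (istar K x)) /\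
  (forall W, istar K (ijoin K W) = ijoin K (image (istar K) W)) /\
  (forall x y : K, isim K (imul K x (isim K (isim K y))) = isim K (imul K x y)) /\
  (forall W, isim K (ijoin K (image (fun x => isim K (isim K x)) W)) = isim K (ijoin K W)) /\
  (forall x : K, istar K (isim K x) = isim K x) /\
  (forall x y : K, isim K (isim K (imul K (isim K (isim K x)) y)) =
                   isim K (ijoin2 (isim K x) (isim K (ijoin2 (isim K x) y)))).

Record IDA_morph {K L : IDAsig} (f : K -> L) : Prop := {
  morph_join : forall W, f (ijoin K W) = ijoin L (image f W);
  morph_mul : forall x y, f (imul K x y) = imul L (f x) (f y);
  morph_star : forall x, f (istar K x) = istar L (f x);
  morph_unit : f (iunit K) = iunit L;
  morph_sim : forall x, f (isim K x) = isim L (f x) }.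
Arguments morph_join {K L f}.
Arguments morph_mul {K L f}.
Arguments morph_star {K L f}.
Arguments morph_unit {K L f}.
Arguments morph_sim {K L f}.

Definition Psi_perp {K : IDAsig} (a : TestT K) : TestT K :=
  exist _ (isim K (proj1_sig a)) (ex_intro _ (proj1_sig a) eq_refl).

Definition Psi_vee {K : IDAsig} (W : TestT K -> Prop) : TestT K :=
  exist _ (vee (fun k => exists t, W t /\ k = proj1_sig t))
        (ex_intro _ _ eq_refl).

Definition Psi_le {K : IDAsig} (a b : TestT K) : Prop := tle (proj1_sig a) (proj1_sig b).

Definition Psi_sup {K : IDAsig} (W : TestT K -> Prop) : TestT K :=
  match excluded_middle_informative (exists x, is_lub (@Psi_le K) W x) with
  | left h => proj1_sig (constructive_indefinite_description _ h)
  | right _ => Psi_vee W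
  end.

Definition Psi (K : IDAsig) : COLsig :=
  {| ccar := TestT K; cle := @Psi_le K; cperp := @Psi_perp K; csup := @Psi_sup K |}.

Definition semiFoulis (K : IDAsig) : Prop := isCOL (Psi K).

Definition Psi_map {K L : IDAsig} (f : K -> L)
  (H : forall x, f (isim K x) = isim L (f x)) (t : TestT K) : TestT L.
Proof.
  refine (exist _ (f (proj1_sig t)) _).
  destruct (proj2_sig t) as [l Hl]. exists (f l). rewrite Hl. apply H.
Defined.

Definition nu {K : IDAsig} (s : K) : TestT K -> TestT K :=
  fun v => exist _ (dot s (proj1_sig v)) (ex_intro _ _ eq_refl).

Section Lin.
Variable M : COLsig.

Definition is_adjoint (f g : M -> M) : Prop :=
  forall x y : M, cle M (f x) (cperp M y) <-> cle M x (cperp M (g y)).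
Definition has_adj (f : M -> M) : Prop := exists g, is_adjoint f g.
Definition LinT : Type := { f : M -> M | has_adj f }.

(* the adjoint f^* (unique in a complete orthomodular lattice) *)
Definition lin_adj (f : LinT) : M -> M :=
  proj1_sig (constructive_indefinite_description _ (proj2_sig f)).

Definition idLin : LinT :=
  exist has_adj (fun x => x) (ex_intro (is_adjoint (fun x => x)) (fun x => x) (fun x y => iff_refl _)).

(* Lin(M) is closed under all the operations below (the paper shows it is an
   IDA); to keep the operations total without proofs we take a map g to its
   element of Lin(M) when g admits an adjoint (always the case for the maps
   below), and to the identity otherwise. *)
Definition mkLin (g : M -> M) : LinT :=
  match excluded_middle_informative (has_adj g) with
  | left h => exist _ g h
  | right _ => idLin
  end.

Definition Lin : IDAsig := {|
  car := LinT;
  ijoin := fun F => mkLin (fun x => csup M (fun z => exists f, F f /\ z = proj1_sig f x));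
  imul := fun f g => mkLin (fun x => proj1_sig f (proj1_sig g x));
  istar := fun f => mkLin (lin_adj f);
  iunit := idLin;
  isim := fun f => mkLin (pi_ (cperp M (proj1_sig f (@ctop M)))) |}.

Definition Pset (L : LinT -> Prop) : IDAsig := {|
  car := { f : LinT | L f } -> Prop;
  ijoin := fun AA c => exists A, AA A /\ A c;
  imul := fun A B c => exists a b, A a /\ B b /\
            proj1_sig (proj1_sig c) = (fun x => proj1_sig (proj1_sig a) (proj1_sig (proj1_sig b) x));
  istar := fun A c => exists a, A a /\ proj1_sig (proj1_sig c) = lin_adj (proj1_sig a);
  iunit := fun c => proj1_sig (proj1_sig c) = (fun x => x);
  isim := fun A c => proj1_sig (proj1_sig c) =
            pi_ (cperp M (csup M (fun z => exists a, A a /\ z = proj1_sig (proj1_sig a) (@ctop M)))) |}.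

End Lin.

(* The functor T : IDA -> IM, given by its object part T(K) ⊆ K; by (T4)  *)
(* T(f) is the restriction of f, so functoriality says that IDA morphisms *)
(* map T(K) into T(L).                                                   *)

Definition Tfun := forall K : IDAsig, K -> Prop.

Definition T_functor (T : Tfun) : Prop :=
  forall (K L : IDAsig) (f : K -> L), is_IDA K -> is_IDA L -> IDA_morph f ->
    forall x, T K x -> T L (f x).

Definition T1 (T : Tfun) : Prop :=
  forall K : IDAsig, is_IDA K ->
    (forall k, test k -> T K k) /\
    T K (iunit K) /\
    (forall x y, T K x -> T K y -> T K (imul K x y)) /\
    (forall x, T K x -> T K (istar K x)).

Definition IM_iso {K L : IDAsig} (A : K -> Prop) (B : L -> Prop) (h : K -> L) : Prop :=
  (forall x, A x -> B (h x)) /\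
  (forall y, B y -> exists x, A x /\ h x = y) /\
  (forall x y, A x -> A y -> h x = h y -> x = y) /\
  (forall x y, A x -> A y -> h (imul K x y) = imul L (h x) (h y)) /\
  (forall x, A x -> h (istar K x) = istar L (h x)) /\
  h (iunit K) = iunit L.

Definition T2 (T : Tfun) : Prop :=
  forall K : IDAsig, is_IDA K -> semiFoulis K ->
    (forall s t, T K s -> T K t -> (s = t <-> equivK s t)) ->
    (forall s, T K s -> has_adj (Psi K) (nu s)) /\
    IM_iso (L := Lin (Psi K)) (T K) (T (Lin (Psi K))) (fun s => mkLin (Psi K) (nu s)).

Definition T3 (T : Tfun) : Prop :=
  forall M : COLsig, isCOL M ->
    IM_iso (L := Pset M (T (Lin M))) (T (Lin M)) (T (Pset M (T (Lin M))))
      (fun f c => proj1_sig c = f).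

Definition TODA (T : Tfun) (K : IDAsig) : Prop :=
  is_IDA K /\
  isCOL (Psi K) /\
  (forall A : K -> Prop,
     (forall x, T K x -> A x) ->
     (forall x y, A x -> A y -> A (imul K x y)) ->
     (forall x, A x -> A (istar K x)) ->
     (forall W, (forall x, W x -> A x) -> A (ijoin K W)) ->
     forall x, A x) /\
  (forall S S' : K -> Prop, (forall x, S x -> T K x) -> (forall x, S' x -> T K x) ->
     (ijoin K S = ijoin K S' <-> (forall x, S x <-> S' x))) /\
  (forall s t, T K s -> T K t -> (s = t <-> equivK s t)).

Definition TODA_morph {K L : IDAsig} (f : K -> L) : Prop := IDA_morph f /\ bijective f.

Definition TODA_iso {K L : IDAsig} (f : K -> L) : Prop :=
  TODA_morph f /\ exists g : L -> K, TODA_morph g /\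
     (forall x, g (f x) = x) /\ (forall y, f (g y) = y).

Definition Gamma (T : Tfun) (M : COLsig) : IDAsig := Pset M (T (Lin M)).

Definition Gamma_map (T : Tfun) {M N : COLsig} (k : M -> N) (kinv : N -> M)
  (A : Gamma T M) : Gamma T N :=
  fun c => exists a, A a /\
    proj1_sig (proj1_sig c) = (fun x => k (proj1_sig (proj1_sig a) (kinv x))).

Definition Sk (T : Tfun) {K : IDAsig} (k : K) : K -> Prop :=
  match excluded_middle_informative
          (exists S : K -> Prop, (forall s, S s -> T K s) /\ ijoin K S = k) with
  | left h => proj1_sig (constructive_indefinite_description _ h)
  | right _ => fun _ => False
  end.

Definition lambda (T : Tfun) {K : IDAsig} (k : K) : Gamma T (Psi K) :=
  fun c => exists s, Sk T k s /\ proj1_sig (proj1_sig c) = nu s.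

(* Main.v *)
Require Import Defs.
From Stdlib Require Import ClassicalEpsilon FunctionalExtensionality PropExtensionality ProofIrrelevance.

Lemma pred_ext {A} (P Q : A -> Prop) : (forall x, P x <-> Q x) -> P = Q.
Proof. intro H; apply functional_extensionality; intro x; apply propositional_extensionality; apply H. Qed.

Lemma sig_eq {A} {P : A -> Prop} (x y : {a | P a}) : proj1_sig x = proj1_sig y -> x = y.
Proof. destruct x, y; simpl; intros ->; f_equal; apply proof_irrelevance. Qed.

Lemma image_comp {A B C} (g : B -> C) (h : A -> B) W :
  image g (image h W) = image (fun x => g (h x)) W.
Proof.
  apply pred_ext; intro z; split.
  - intros (b & (a & Ha & ->) & ->). exists a; auto.
  - intros (a & Ha & ->). exists (h a); split; auto. exists a; auto.
Qed.

Lemma image_pair {A B : IDAsig} (f : A -> B) (x y : A) :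
  image f (pair2 x y) = pair2 (f x) (f y).
Proof.
  apply pred_ext; intro z; unfold pair2; split.
  - intros (a & [-> | ->] & ->); auto.
  - intros [-> | ->]; [exists x | exists y]; auto.
Qed.

Lemma image_single {A B} (f : A -> B) (x : A) :
  image f (fun z => z = x) = (fun z => z = f x).
Proof.
  apply pred_ext; intro z; split.
  - intros (a & -> & ->); auto.
  - intros ->; exists x; auto.
Qed.

Section IDAfacts.
Variable K : IDAsig.
Hypothesis HK : is_IDA K.

Lemma K_po : is_partial_order (@ile K).
Proof. destruct HK as (H&_); exact H. Qed.
Lemma K_lub W : is_lub (@ile K) W (ijoin K W).
Proof. destruct HK as (_&H&_); exact (H W). Qed.
Lemma K_assoc x y z : imul K x (imul K y z) = imul K (imul K x y) z.
Proof. destruct HK as (_&_&H&_); apply H. Qed.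
Lemma K_lunit x : imul K (iunit K) x = x.
Proof. destruct HK as (_&_&_&H&_); apply H. Qed.
Lemma K_runit x : imul K x (iunit K) = x.
Proof. destruct HK as (_&_&_&_&H&_); apply H. Qed.
Lemma K_distl x W : imul K x (ijoin K W) = ijoin K (image (imul K x) W).
Proof. destruct HK as (_&_&_&_&_&H&_); apply H. Qed.
Lemma K_distr x W : imul K (ijoin K W) x = ijoin K (image (fun y => imul K y x) W).
Proof. destruct HK as (_&_&_&_&_&_&H&_); apply H. Qed.
Lemma K_ss x : istar K (istar K x) = x.
Proof. destruct HK as (_&_&_&_&_&_&_&H&_); apply H. Qed.
Lemma K_smul x y : istar K (imul K x y) = imul K (istar K y) (istar K x).
Proof. destruct HK as (_&_&_&_&_&_&_&_&H&_); apply H. Qed.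
Lemma K_sjoin W : istar K (ijoin K W) = ijoin K (image (istar K) W).
Proof. destruct HK as (_&_&_&_&_&_&_&_&_&H&_); apply H. Qed.
Lemma K_sim1 x y : isim K (imul K x (isim K (isim K y))) = isim K (imul K x y).
Proof. destruct HK as (_&_&_&_&_&_&_&_&_&_&H&_); apply H. Qed.
Lemma K_sim2 W : isim K (ijoin K (image (fun x => isim K (isim K x)) W)) = isim K (ijoin K W).
Proof. destruct HK as (_&_&_&_&_&_&_&_&_&_&_&H&_); apply H. Qed.
Lemma K_sim3 x : istar K (isim K x) = isim K x.
Proof. destruct HK as (_&_&_&_&_&_&_&_&_&_&_&_&H&_); apply H. Qed.
Lemma K_sim4 x y : isim K (isim K (imul K (isim K (isim K x)) y)) =
                   isim K (ijoin2 (isim K x) (isim K (ijoin2 (isim K x) y))).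
Proof. destruct HK as (_&_&_&_&_&_&_&_&_&_&_&_&_&H); apply H. Qed.

Lemma le_refl (x : K) : ile x x.
Proof. destruct K_po as (H&_); apply H. Qed.
Lemma le_antisym (x y : K) : ile x y -> ile y x -> x = y.
Proof. destruct K_po as (_&H&_); apply H. Qed.
Lemma le_trans (x y z : K) : ile x y -> ile y z -> ile x z.
Proof. destruct K_po as (_&_&H); apply H. Qed.
Lemma le_join W (w : K) : W w -> ile w (ijoin K W).
Proof. intro; apply (proj1 (K_lub W)); auto. Qed.
Lemma join_le W (y : K) : (forall w, W w -> ile w y) -> ile (ijoin K W) y.
Proof. apply (proj2 (K_lub W)). Qed.
Lemma lub_eq W (x : K) : is_lub ile W x -> ijoin K W = x.
Proof.
  intros [H1 H2]. apply le_antisym.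
  - apply join_le; auto.
  - apply H2. intros; apply le_join; auto.
Qed.
Lemma join_single (x : K) : ijoin K (fun z => z = x) = x.
Proof. apply lub_eq; split; [intros w ->; apply le_refl | intros y H; apply H; auto]. Qed.
Lemma le_def (x y : K) : ile x y -> ijoin2 x y = y.
Proof. auto. Qed.
Lemma le_j2l (x y : K) : ile x (ijoin2 x y).
Proof. apply le_join; left; auto. Qed.
Lemma le_j2r (x y : K) : ile y (ijoin2 x y).
Proof. apply le_join; right; auto. Qed.
Lemma j2_le (x y z : K) : ile x z -> ile y z -> ile (ijoin2 x y) z.
Proof. intros; apply join_le; intros w [-> | ->]; auto. Qed.

Lemma sim_sim_sim (x : K) : isim K (isim K (isim K x)) = isim K x.
Proof.
  pose proof (K_sim2 (fun z => z = x)) as H.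
  rewrite image_single, !join_single in H. exact H.
Qed.
Lemma test_ss (t : K) : test t -> isim K (isim K t) = t.
Proof. intros [l ->]; apply sim_sim_sim. Qed.
Lemma sim_pair (x y : K) : isim K (ijoin2 x y) = isim K (ijoin2 (isim K (isim K x)) (isim K (isim K y))).
Proof.
  pose proof (K_sim2 (pair2 x y)) as H. rewrite image_pair in H.
  unfold ijoin2; symmetry; exact H.
Qed.

Lemma join_mul (S1 S2 : K -> Prop) :
  ijoin K (fun z => exists a b, S1 a /\ S2 b /\ z = imul K a b) = imul K (ijoin K S1) (ijoin K S2).
Proof.
  rewrite K_distr. apply le_antisym.
  - apply join_le. intros z (a & b & Ha & Hb & ->).
    apply le_trans with (imul K a (ijoin K S2)).
    + rewrite K_distl. apply le_join. exists b; auto.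
    + apply le_join. exists a; auto.
  - apply join_le. intros z (a & Ha & ->). rewrite K_distl. apply join_le.
    intros w (b & Hb & ->). apply le_join. exists a, b; auto.
Qed.

End IDAfacts.
Section COLfacts.
Variable M : COLsig.
Hypothesis HM : isCOL M.

Lemma c_refl (x : M) : cle M x x.
Proof. destruct HM as ((H&_)&_); apply H. Qed.
Lemma c_antisym (x y : M) : cle M x y -> cle M y x -> x = y.
Proof. destruct HM as ((_&H&_)&_); apply H. Qed.
Lemma c_trans (x y z : M) : cle M x y -> cle M y z -> cle M x z.
Proof. destruct HM as ((_&_&H)&_); apply H. Qed.
Lemma c_ub W (w : M) : W w -> cle M w (csup M W).
Proof. destruct HM as (_&H&_); intro; apply (proj1 (H W)); auto. Qed.
Lemma c_least W (y : M) : (forall w, W w -> cle M w y) -> cle M (csup M W) y.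
Proof. destruct HM as (_&H&_); apply (proj2 (H W)). Qed.
Lemma c_pp (x : M) : cperp M (cperp M x) = x.
Proof. destruct HM as (_&_&H&_); apply H. Qed.
Lemma c_anti (x y : M) : cle M x y -> cle M (cperp M y) (cperp M x).
Proof. destruct HM as (_&_&_&H&_); apply H. Qed.
Lemma c_meet_compl (x : M) : cmeet2 x (cperp M x) = @cbot M.
Proof. destruct HM as (_&_&_&_&H&_); apply H. Qed.

Lemma c_swap (x y : M) : cle M x (cperp M y) -> cle M y (cperp M x).
Proof. intro H. apply c_anti in H. rewrite c_pp in H. exact H. Qed.
Lemma c_anti' (x y : M) : cle M (cperp M x) y -> cle M (cperp M y) x.
Proof. intro H. apply c_anti in H. rewrite c_pp in H. exact H. Qed.
Lemma c_meet_l (x y : M) : cle M (cmeet2 x y) x.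
Proof. apply c_least. intros w [H _]; auto. Qed.
Lemma c_meet_r (x y : M) : cle M (cmeet2 x y) y.
Proof. apply c_least. intros w [_ H]; auto. Qed.
Lemma c_le_meet (x y z : M) : cle M z x -> cle M z y -> cle M z (cmeet2 x y).
Proof. intros; apply c_ub; auto. Qed.
Lemma c_le_j2l (x y : M) : cle M x (cjoin2 x y).
Proof. apply c_ub; auto. Qed.
Lemma c_le_j2r (x y : M) : cle M y (cjoin2 x y).
Proof. apply c_ub; auto. Qed.
Lemma c_j2_le (x y z : M) : cle M x z -> cle M y z -> cle M (cjoin2 x y) z.
Proof. intros; apply c_least; intros w [-> | ->]; auto. Qed.
Lemma c_j2_idem (x : M) : cjoin2 x x = x.
Proof. apply c_antisym. apply c_j2_le; apply c_refl. apply c_le_j2l. Qed.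
Lemma c_bot_le (y : M) : cle M (@cbot M) y.
Proof. apply c_least; intros w []. Qed.
Lemma c_le_top (y : M) : cle M y (@ctop M).
Proof. apply c_ub; auto. Qed.
Lemma c_demorgan (x y : M) : cmeet2 x y = cperp M (cjoin2 (cperp M x) (cperp M y)).
Proof.
  apply c_antisym.
  - apply c_swap. apply c_j2_le; apply c_anti; [apply c_meet_l | apply c_meet_r].
  - apply c_le_meet; apply c_anti'; [apply c_le_j2l | apply c_le_j2r].
Qed.
Lemma c_top_unique (a : M) : (forall y, cle M y a) -> @ctop M = a.
Proof. intro H; apply c_antisym; [apply H | apply c_le_top]. Qed.
End COLfacts.

Section Psifacts.
Variable K : IDAsig.
Hypothesis HK : is_IDA K.

Definition Wp (W : TestT K -> Prop) : K -> Prop := fun k => exists t, W t /\ k = proj1_sig t.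

Lemma vee_lub (W : TestT K -> Prop) : is_lub (@Psi_le K) W (Psi_vee W).
Proof.
  split.
  - intros t Ht. set (t' := proj1_sig t). set (X := ijoin K (Wp W)).
    assert (Ht' : isim K (isim K t') = t') by (apply test_ss; auto; apply (proj2_sig t)).
    assert (E : isim K (ijoin2 t' (isim K (isim K X))) = isim K X).
    { transitivity (isim K (ijoin2 t' X)).
      - rewrite (sim_pair K HK t' X). rewrite Ht'. reflexivity.
      - rewrite (le_def K t' X); auto. apply le_join; auto. exists t; auto. }
    exact (f_equal (isim K) E).
  - intros u Hu. set (u' := proj1_sig u). set (X := ijoin K (Wp W)).
    assert (Hu' : isim K (isim K u') = u') by (apply test_ss; auto; apply (proj2_sig u)).
    set (V := fun z => z = u' \/ exists t, W t /\ z = ijoin2 (proj1_sig t) u').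
    assert (HV : ijoin K V = ijoin2 X u').
    { apply le_antisym; auto.
      - apply join_le; auto. intros w [-> | (t & Ht & ->)].
        + apply le_j2r; auto.
        + apply j2_le; auto. apply le_trans with X; auto.
          apply le_join; auto. exists t; auto. apply le_j2l; auto. apply le_j2r; auto.
      - apply j2_le; auto.
        + apply join_le; auto. intros w (t & Ht & ->).
          apply le_trans with (ijoin2 (proj1_sig t) u'); auto. apply le_j2l; auto.
          apply le_join; auto. right; exists t; auto.
        + apply le_join; auto. left; auto. }
    assert (HI : image (fun x => isim K (isim K x)) V = (fun z => z = u')).
    { apply pred_ext; intro z; split.
      - intros (v & [-> | (t & Ht & ->)] & ->); auto. apply Hu; auto.
      - intros ->. exists u'; split; auto. left; auto. }
    assert (E : isim K (ijoin2 (isim K (isim K X)) u') = isim K u').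
    { transitivity (isim K (ijoin2 X u')).
      - rewrite (sim_pair K HK X u'), Hu'; reflexivity.
      - rewrite <- HV, <- (K_sim2 K HK), HI, join_single; auto. }
    transitivity (isim K (isim K u')); [exact (f_equal (isim K) E) | exact Hu'].
Qed.

Hypothesis HC : isCOL (Psi K).

Lemma csup_Psi W : csup (Psi K) W = Psi_vee W.
Proof.
  destruct (vee_lub W) as [H1 H2].
  apply (c_antisym _ HC).
  - apply (c_least _ HC). exact H1.
  - apply H2. intros w Hw. apply (c_ub _ HC); auto.
Qed.

Lemma proj_csup W : proj1_sig (csup (Psi K) W) = vee (Wp W).
Proof. rewrite csup_Psi; reflexivity. Qed.

Lemma proj_join2 (u v : Psi K) : proj1_sig (cjoin2 u v) = vee (pair2 (proj1_sig u) (proj1_sig v)).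
Proof.
  unfold cjoin2. rewrite proj_csup. f_equal. f_equal. apply pred_ext; intro z; unfold Wp, pair2; split.
  - intros (t & [-> | ->] & ->); auto.
  - intros [-> | ->]; eauto.
Qed.

Lemma proj_perp (u : Psi K) : proj1_sig (cperp (Psi K) u) = isim K (proj1_sig u).
Proof. reflexivity. Qed.

Definition topK : TestT K := exist _ (isim K (isim K (iunit K))) (ex_intro _ _ eq_refl).

Lemma ctop_Psi : @ctop (Psi K) = topK.
Proof.
  set (a := topK : Psi K).
  assert (Hb : forall b : Psi K, cle (Psi K) b (cjoin2 (cperp (Psi K) b) a)).
  { intro b.
    assert (E : b = cmeet2 b (cjoin2 (cperp (Psi K) b) a)).
    { rewrite (c_demorgan _ HC). apply sig_eq.
      rewrite proj_perp, proj_join2, proj_perp, proj_perp, proj_join2, proj_perp.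
      set (x := proj1_sig b).
      assert (Hx : isim K (isim K x) = x) by (apply test_ss; auto; apply (proj2_sig b)).
      unfold vee. rewrite !sim_sim_sim by auto.
      change (proj1_sig a) with (isim K (isim K (iunit K))).
      assert (Hs : isim K (ijoin2 (isim K x) (isim K (isim K (iunit K)))) = isim K (ijoin2 (isim K x) (iunit K))).
      { rewrite (sim_pair K HK (isim K x) (iunit K)), sim_sim_sim by auto; reflexivity. }
      unfold ijoin2 in Hs. rewrite Hs.
      pose proof (K_sim4 K HK x (iunit K)) as H4.
      rewrite K_runit, sim_sim_sim, Hx in H4 by auto.
      exact H4. }
    rewrite E at 1. apply (c_meet_r _ HC). }
  apply (c_top_unique _ HC). intro y.
  assert (H1 : cle (Psi K) (cperp (Psi K) a) a).
  { pose proof (Hb (cperp (Psi K) a)) as H. rewrite (c_pp _ HC), (c_j2_idem _ HC) in H. exact H. }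
  assert (H2 : cle (Psi K) (cperp (Psi K) a) (@cbot (Psi K))).
  { rewrite <- (c_meet_compl _ HC a). apply (c_le_meet _ HC); auto. apply (c_refl _ HC). }
  rewrite <- (c_pp _ HC a). apply (c_swap _ HC). apply (c_trans _ HC) with (@cbot (Psi K)); auto. apply (c_bot_le _ HC).
Qed.

Lemma pi_Psi (m v : Psi K) :
  proj1_sig (pi_ m v) = isim K (ijoin2 (isim K (proj1_sig m)) (isim K (ijoin2 (isim K (proj1_sig m)) (proj1_sig v)))).
Proof.
  unfold pi_. rewrite (c_demorgan _ HC).
  rewrite proj_perp, proj_join2, proj_perp, proj_perp, proj_join2, proj_perp.
  unfold vee. rewrite !sim_sim_sim by auto. reflexivity.
Qed.

End Psifacts.

Lemma image_id {A} (W : A -> Prop) : image (fun x => x) W = W.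
Proof. apply pred_ext; intro z; split; [intros (a & Ha & ->); auto | intro; exists z; auto]. Qed.

Lemma inv_morph {K L : IDAsig} (f : K -> L) (g : L -> K) :
  IDA_morph f -> (forall x, g (f x) = x) -> (forall y, f (g y) = y) -> IDA_morph g.
Proof.
  intros Hf gf fg.
  assert (fi : forall a b, f a = f b -> a = b).
  { intros a b H. rewrite <- (gf a), <- (gf b), H; reflexivity. }
  constructor.
  - intro W. apply fi. rewrite fg, (morph_join Hf), image_comp.
    replace (fun x => f (g x)) with (fun x : L => x) by (apply functional_extensionality; intro; auto).
    rewrite image_id; reflexivity.
  - intros x y. apply fi. rewrite (morph_mul Hf), !fg; reflexivity.
  - intros x. apply fi. rewrite (morph_star Hf), !fg; reflexivity.
  - apply fi. rewrite (morph_unit Hf), !fg; reflexivity.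
  - intros x. apply fi. rewrite (morph_sim Hf), !fg; reflexivity.
Qed.

Section Transport.
Variables K L : IDAsig.
Variable f : K -> L.
Variable g : L -> K.
Hypothesis Hf : IDA_morph f.
Hypothesis Hg : IDA_morph g.
Hypothesis fg : forall y, f (g y) = y.
Hypothesis gf : forall x, g (f x) = x.

Lemma g_inj y1 y2 : g y1 = g y2 -> y1 = y2.
Proof. intro H. rewrite <- (fg y1), <- (fg y2), H; reflexivity. Qed.
Lemma g_join2 x y : g (ijoin2 x y) = ijoin2 (g x) (g y).
Proof. unfold ijoin2. rewrite (morph_join Hg), image_pair; reflexivity. Qed.
Lemma ile_iff x y : @ile L x y <-> @ile K (g x) (g y).
Proof.
  unfold ile. split; intro H.
  - rewrite <- g_join2, H; reflexivity.
  - apply g_inj. rewrite g_join2; exact H.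
Qed.

Ltac gpush := repeat (rewrite (morph_sim Hg) || rewrite (morph_mul Hg) || rewrite (morph_star Hg)
   || rewrite (morph_unit Hg) || rewrite g_join2).

Lemma transport_IDA : is_IDA K -> is_IDA L.
Proof.
  intro HK.
  assert (Hpo : is_partial_order (@ile L)).
  { split; [|split].
    - intro x; apply ile_iff, le_refl; auto.
    - intros x y H1 H2; apply g_inj; apply ile_iff in H1; apply ile_iff in H2; apply le_antisym; auto.
    - intros x y z H1 H2; apply ile_iff in H1; apply ile_iff in H2; apply ile_iff; eapply le_trans; eauto. }
  assert (Hlub : forall W, is_lub (@ile L) W (ijoin L W)).
  { intro W; split.
    - intros w Hw. apply ile_iff. rewrite (morph_join Hg). apply le_join; auto. exists w; auto.
    - intros y Hy. apply ile_iff. rewrite (morph_join Hg). apply join_le; auto.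
      intros z (w & Hw & ->). apply ile_iff; auto. }
  refine (conj Hpo (conj Hlub _)).
  repeat split.
  - intros x y z; apply g_inj; gpush; apply K_assoc; auto.
  - intros x; apply g_inj; gpush; apply K_lunit; auto.
  - intros x; apply g_inj; gpush; apply K_runit; auto.
  - intros x W; apply g_inj; gpush. rewrite !(morph_join Hg), K_distl, !image_comp by auto.
    f_equal; f_equal; apply functional_extensionality; intro; gpush; reflexivity.
  - intros x W; apply g_inj; gpush. rewrite !(morph_join Hg), K_distr, !image_comp by auto.
    f_equal; f_equal; apply functional_extensionality; intro; gpush; reflexivity.
  - intros x; apply g_inj; gpush; apply K_ss; auto.
  - intros x y; apply g_inj; gpush; apply K_smul; auto.
  - intros W; apply g_inj; gpush. rewrite !(morph_join Hg), K_sjoin, !image_comp by auto.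
    f_equal; f_equal; apply functional_extensionality; intro; gpush; reflexivity.
  - intros x y; apply g_inj; gpush; apply K_sim1; auto.
  - intros W; apply g_inj; gpush. rewrite !(morph_join Hg), !image_comp.
    rewrite <- (K_sim2 K HK (image g W)), image_comp.
    f_equal; f_equal; f_equal; apply functional_extensionality; intro; gpush; reflexivity.
  - intros x; apply g_inj; gpush; apply K_sim3; auto.
  - intros x y; apply g_inj; gpush; apply K_sim4; auto.
Qed.

End Transport.

Section COLTransport.
Variables M N : COLsig.
Variable F : M -> N.
Variable G : N -> M.
Hypothesis FG : forall y, F (G y) = y.
Hypothesis GF : forall x, G (F x) = x.
Hypothesis Hle : forall a b, cle N a b <-> cle M (G a) (G b).
Hypothesis Hperp : forall a, G (cperp N a) = cperp M (G a).
Hypothesis Hsup : forall W, G (csup N W) = csup M (image G W).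

Lemma G_inj y1 y2 : G y1 = G y2 -> y1 = y2.
Proof. intro H. rewrite <- (FG y1), <- (FG y2), H; reflexivity. Qed.

Lemma G_meet x y : G (cmeet2 x y) = cmeet2 (G x) (G y).
Proof.
  unfold cmeet2. rewrite Hsup. f_equal. apply pred_ext; intro w; split.
  - intros (z & [H1 H2] & ->). split; apply Hle; auto.
  - intros [H1 H2]. exists (F w). rewrite GF. split; auto. split; apply Hle; rewrite GF; auto.
Qed.
Lemma G_join x y : G (cjoin2 x y) = cjoin2 (G x) (G y).
Proof.
  unfold cjoin2. rewrite Hsup. f_equal. apply pred_ext; intro w; split.
  - intros (z & [-> | ->] & ->); auto.
  - intros [-> | ->]; [exists x | exists y]; split; auto.
Qed.
Lemma G_bot : G (@cbot N) = @cbot M.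
Proof. unfold cbot. rewrite Hsup. f_equal. apply pred_ext; intro w; split; [intros (z & [] & _) | intros []]. Qed.
Lemma G_top : G (@ctop N) = @ctop M.
Proof.
  unfold ctop. rewrite Hsup. f_equal. apply pred_ext; intro w; split; auto.
  intros _. exists (F w); auto.
Qed.

Lemma COL_transport : isCOL M -> isCOL N.
Proof.
  intro HM.
  split; [|split; [|split; [|split; [|split; [|split]]]]].
  - split; [|split].
    + intro x; apply Hle, c_refl; auto.
    + intros x y H1 H2; apply G_inj; apply Hle in H1; apply Hle in H2; apply (c_antisym _ HM); auto.
    + intros x y z H1 H2; apply Hle in H1; apply Hle in H2; apply Hle; eapply (c_trans _ HM); eauto.
  - intro W; split.
    + intros w Hw; apply Hle; rewrite Hsup; apply (c_ub _ HM); exists w; auto.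
    + intros y Hy; apply Hle; rewrite Hsup; apply (c_least _ HM); intros z (w & Hw & ->); apply Hle; auto.
  - intro x; apply G_inj; rewrite !Hperp; apply (c_pp _ HM).
  - intros x y H; apply Hle; rewrite !Hperp; apply (c_anti _ HM); apply Hle; auto.
  - intro x; apply G_inj; rewrite G_meet, Hperp, G_bot. apply (c_meet_compl _ HM).
  - intro x; apply G_inj; rewrite G_join, Hperp, G_top. destruct HM as (_&_&_&_&_&H&_); apply H.
  - intros x y H; apply G_inj; rewrite G_join, G_meet, Hperp. destruct HM as (_&_&_&_&_&_&H'); apply H'.
    apply Hle; auto.
Qed.
End COLTransport.

Lemma Psi_sup_spec (K : IDAsig) (W : TestT K -> Prop) :
  (exists x, is_lub (@Psi_le K) W x) -> is_lub (@Psi_le K) W (Psi_sup W).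
Proof.
  intro H. unfold Psi_sup. destruct (excluded_middle_informative _) as [h | n].
  - apply (proj2_sig (constructive_indefinite_description _ h)).
  - contradiction.
Qed.

Section PsiTransport.
Variables K L : IDAsig.
Variable f : K -> L.
Variable g : L -> K.
Hypothesis Hf : IDA_morph f.
Hypothesis Hg : IDA_morph g.
Hypothesis fg : forall y, f (g y) = y.
Hypothesis gf : forall x, g (f x) = x.

Lemma g_vee2 x y : g (vee (pair2 x y)) = vee (pair2 (g x) (g y)).
Proof. unfold vee. rewrite !(morph_sim Hg), (morph_join Hg), image_pair; reflexivity. Qed.

Lemma Psi_transport : isCOL (Psi K) -> isCOL (Psi L).
Proof.
  intro HC.
  set (F := Psi_map f (morph_sim Hf) : Psi K -> Psi L).
  set (G := Psi_map g (morph_sim Hg) : Psi L -> Psi K).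
  assert (FG : forall y, F (G y) = y) by (intro; apply sig_eq; simpl; apply fg).
  assert (GF : forall x, G (F x) = x) by (intro; apply sig_eq; simpl; apply gf).
  assert (Hle : forall a b, cle (Psi L) a b <-> cle (Psi K) (G a) (G b)).
  { intros a b; simpl; unfold Psi_le, tle; simpl. rewrite <- g_vee2. split; intro H.
    - rewrite H; reflexivity.
    - apply (g_inj K L f g fg). exact H. }
  assert (Hperp : forall a, G (cperp (Psi L) a) = cperp (Psi K) (G a)).
  { intro a; apply sig_eq; simpl. apply (morph_sim Hg). }
  apply (COL_transport (Psi K) (Psi L) F G FG GF Hle Hperp); auto.
  intro W.
  set (s := csup (Psi K) (image G W)).
  assert (Hs : is_lub (cle (Psi L)) W (F s)).
  { split.
    - intros w Hw. apply Hle. rewrite GF. apply (c_ub _ HC). exists w; auto.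
    - intros u Hu. apply Hle. rewrite GF. apply (c_least _ HC). intros z (w & Hw & ->). apply Hle; auto. }
  assert (Hsup : is_lub (cle (Psi L)) W (csup (Psi L) W)).
  { apply Psi_sup_spec. exists (F s); exact Hs. }
  destruct Hs as [Hs1 Hs2]. destruct Hsup as [Hp1 Hp2].
  apply (c_antisym _ HC).
  - rewrite <- (GF s). apply Hle. apply Hp2. auto.
  - apply (c_least _ HC). intros z (w & Hw & ->). apply Hle; auto.
Qed.

Variable T : Tfun.
Hypothesis HTf : T_functor T.

Lemma TODA_transport : TODA T K -> TODA T L.
Proof.
  intros (HK & HC & H2 & H3 & H4).
  assert (HL : is_IDA L) by (apply (transport_IDA K L f g Hg fg); auto).
  split; [auto | split; [apply Psi_transport; auto | split; [|split]]].
  - intros A HA1 HA2 HA3 HA4 y.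
    rewrite <- (fg y). apply (H2 (fun x => A (f x))).
    + intros x Hx. apply HA1. apply (HTf K L f); auto.
    + intros x z H H'. rewrite (morph_mul Hf). auto.
    + intros x H. rewrite (morph_star Hf). auto.
    + intros W HW. rewrite (morph_join Hf). apply HA4. intros x (a & Ha & ->). auto.
  - intros S S' HS HS'. split.
    + intro E.
      assert (E' : ijoin K (image g S) = ijoin K (image g S')).
      { rewrite <- !(morph_join Hg), E; reflexivity. }
      assert (E2 : forall x, image g S x <-> image g S' x).
      { assert (T1' : forall x, image g S x -> T K x) by (intros x (a & Ha & ->); apply (HTf L K g); auto).
        assert (T2' : forall x, image g S' x -> T K x) by (intros x (a & Ha & ->); apply (HTf L K g); auto).
        apply (proj1 (H3 (image g S) (image g S') T1' T2') E'). }
      intro x; split; intro Hx.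
      * destruct (proj1 (E2 (g x))) as (y & Hy & Exy). exists x; auto.
        apply (g_inj K L f g fg) in Exy; subst; auto.
      * destruct (proj2 (E2 (g x))) as (y & Hy & Exy). exists x; auto.
        apply (g_inj K L f g fg) in Exy; subst; auto.
    + intro E. replace S' with S by (apply pred_ext; auto). reflexivity.
  - intros s t Hs Ht. split.
    + intros ->. intros w _; reflexivity.
    + intro E. apply (g_inj K L f g fg). apply H4; try (apply (HTf L K g); auto).
      intros w Hw. rewrite <- (gf w).
      assert (Hw' : test (f w)) by (destruct Hw as [l ->]; exists (f l); apply (morph_sim Hf)).
      unfold dot. rewrite <- !(morph_mul Hg), <- !(morph_sim Hg).
      specialize (E (f w) Hw'). unfold dot in E. rewrite E. reflexivity.
Qed.
End PsiTransport.

Lemma mkLin_eq (M : COLsig) (g : M -> M) (h : has_adj M g) : mkLin M g = exist _ g h.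
Proof.
  unfold mkLin. destruct (excluded_middle_informative _) as [h' | n].
  - apply sig_eq; reflexivity.
  - contradiction.
Qed.

Lemma lin_adj_spec (M : COLsig) (f : LinT M) : is_adjoint M (proj1_sig f) (lin_adj M f).
Proof. unfold lin_adj. apply (proj2_sig (constructive_indefinite_description _ _)). Qed.

Lemma adj_sym (M : COLsig) (HM : isCOL M) (f g : M -> M) : is_adjoint M f g -> is_adjoint M g f.
Proof.
  intros H x y. split; intro H1.
  - apply (c_swap _ HM). apply H. apply (c_swap _ HM). exact H1.
  - apply (c_swap _ HM). apply H. apply (c_swap _ HM). exact H1.
Qed.

Lemma lin_adj_has (M : COLsig) (HM : isCOL M) (f : LinT M) : has_adj M (lin_adj M f).
Proof. exists (proj1_sig f). apply adj_sym; auto. apply lin_adj_spec. Qed.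

Section Main.
Variable T : Tfun.
Hypothesis HTf : T_functor T.
Hypothesis HT1 : T1 T.
Hypothesis HT2 : T2 T.
Variable K : IDAsig.
Hypothesis HT : TODA T K.

Lemma HK : is_IDA K.
Proof. destruct HT as (H&_); exact H. Qed.
Lemma HC : isCOL (Psi K).
Proof. destruct HT as (_&H&_); exact H. Qed.
Lemma H3 S S' : (forall x, S x -> T K x) -> (forall x, S' x -> T K x) ->
     (ijoin K S = ijoin K S' <-> (forall x, S x <-> S' x)).
Proof. destruct HT as (_&_&_&H&_); apply H. Qed.
Lemma H4 : forall s t, T K s -> T K t -> (s = t <-> equivK s t).
Proof. destruct HT as (_&_&_&_&H); apply H. Qed.

Lemma T_test k : test k -> T K k.
Proof. apply (HT1 K HK). Qed.
Lemma T_unit : T K (iunit K).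
Proof. apply (HT1 K HK). Qed.
Lemma T_mul x y : T K x -> T K y -> T K (imul K x y).
Proof. apply (HT1 K HK). Qed.
Lemma T_star x : T K x -> T K (istar K x).
Proof. apply (HT1 K HK). Qed.

Lemma S_exists k : exists S : K -> Prop, (forall s, S s -> T K s) /\ ijoin K S = k.
Proof.
  destruct HT as (_&_&H2&_).
  apply (H2 (fun k => exists S : K -> Prop, (forall s, S s -> T K s) /\ ijoin K S = k)).
  - intros x Hx. exists (fun z => z = x). split; [intros s ->; auto | apply join_single, HK].
  - intros x y (S1 & HS1 & <-) (S2 & HS2 & <-).
    exists (fun z => exists a b, S1 a /\ S2 b /\ z = imul K a b). split.
    + intros s (a & b & Ha & Hb & ->). apply T_mul; auto.
    + apply join_mul, HK.
  - intros x (S1 & HS1 & <-). exists (image (istar K) S1). split.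
    + intros s (a & Ha & ->). apply T_star; auto.
    + rewrite K_sjoin; auto. apply HK.
  - intros W HW. exists (fun s => T K s /\ exists x, W x /\ exists S, ((forall s, S s -> T K s) /\ ijoin K S = x) /\ S s).
    split; [intros s [Hs _]; auto|].
    pose proof HK as HK.
    apply le_antisym; auto.
    + apply join_le; auto. intros s (Hs & x & Hx & S & (HS & <-) & Hs').
      apply le_trans with (ijoin K S); auto. apply le_join; auto. apply le_join; auto.
    + apply join_le; auto. intros x Hx. destruct (HW x Hx) as (S & HS & <-).
      apply join_le; auto. intros s Hs. apply le_join; auto. split; auto.
      exists (ijoin K S); split; auto. exists S; auto.
Qed.

Lemma Sk_spec k : (forall s, Sk T k s -> T K s) /\ ijoin K (Sk T k) = k.
Proof.
  unfold Sk. destruct (excluded_middle_informative _) as [h | n].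
  - apply (proj2_sig (constructive_indefinite_description _ h)).
  - exfalso; apply n; apply S_exists.
Qed.

Lemma Sk_T k s : Sk T k s -> T K s.
Proof. apply Sk_spec. Qed.
Lemma Sk_join k : ijoin K (Sk T k) = k.
Proof. apply Sk_spec. Qed.

Lemma Sk_unique k S : (forall s, S s -> T K s) -> ijoin K S = k -> Sk T k = S.
Proof.
  intros HS E. apply pred_ext. apply H3; auto. apply Sk_T. rewrite Sk_join; auto.
Qed.

Lemma T2K : (forall s, T K s -> has_adj (Psi K) (nu s)) /\
    IM_iso (L := Lin (Psi K)) (T K) (T (Lin (Psi K))) (fun s => mkLin (Psi K) (nu s)).
Proof. apply HT2. apply HK. apply HC. apply H4. Qed.

Lemma nu_adj s : T K s -> has_adj (Psi K) (nu s).
Proof. apply T2K. Qed.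

Lemma nu_mk s (h : T K s) : mkLin (Psi K) (nu s) = exist _ (nu s) (nu_adj s h).
Proof. apply mkLin_eq. Qed.

Definition ElT := {f : LinT (Psi K) | T (Lin (Psi K)) f}.
Definition fn (c : ElT) : TestT K -> TestT K := proj1_sig (proj1_sig c).

Lemma Lof_T s : T K s -> T (Lin (Psi K)) (mkLin (Psi K) (nu s)).
Proof. destruct T2K as (_ & H & _). apply H. Qed.

Definition Lof s (h : T K s) : ElT := exist _ (mkLin (Psi K) (nu s)) (Lof_T s h).

Lemma fn_Lof s h : fn (Lof s h) = nu s.
Proof. unfold fn, Lof; simpl. rewrite (nu_mk s h). reflexivity. Qed.

Lemma c_inj (c c' : ElT) : fn c = fn c' -> c = c'.
Proof. intro E. apply sig_eq, sig_eq. exact E. Qed.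

Lemma c_surj (c : ElT) : exists s, T K s /\ fn c = nu s.
Proof.
  destruct T2K as (_ & _ & H & _). destruct (H _ (proj2_sig c)) as (x & Hx & E).
  exists x; split; auto. unfold fn. rewrite <- E. rewrite (nu_mk x Hx). reflexivity.
Qed.

Lemma nu_inj s t : T K s -> T K t -> nu s = nu t -> s = t.
Proof.
  intros Hs Ht E. destruct T2K as (_ & _ & _ & H & _). apply H; auto. rewrite E; reflexivity.
Qed.

Lemma nu_mul s t : nu (imul K s t) = fun v => nu s (nu t v).
Proof.
  apply functional_extensionality; intro v. apply sig_eq. simpl. unfold dot.
  f_equal. rewrite (K_sim1 K HK s (imul K t (proj1_sig v))). rewrite K_assoc; auto. apply HK.
Qed.

Lemma nu_unit : nu (iunit K) = fun v => v.
Proof.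
  apply functional_extensionality; intro v. apply sig_eq. simpl. unfold dot.
  rewrite K_lunit by apply HK. apply test_ss. apply HK. apply (proj2_sig v).
Qed.

Lemma nu_star s : T K s -> lin_adj (Psi K) (mkLin (Psi K) (nu s)) = nu (istar K s).
Proof.
  intro Hs. destruct T2K as (_ & _ & _ & _ & _ & H & _).
  pose proof (H s Hs) as E. simpl in E.
  rewrite (nu_mk (istar K s) (T_star s Hs)) in E.
  rewrite (mkLin_eq _ _ (lin_adj_has _ HC _)) in E.
  apply (f_equal (@proj1_sig _ _)) in E. simpl in E. symmetry; exact E.
Qed.

Definition lam := lambda T (K := K).

Definition ginv (A : Gamma T (Psi K)) : K :=
  ijoin K (fun s => T K s /\ exists c, A c /\ fn c = nu s).

Lemma lam_ginv A : lam (ginv A) = A.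
Proof.
  unfold lam, lambda. rewrite (Sk_unique (ginv A) _ (fun s H => proj1 H) eq_refl).
  apply pred_ext; intro c; split.
  - intros (s & (Hs & c' & Hc' & E) & E'). replace c with c'; auto. apply c_inj. unfold fn in *. congruence.
  - intro Hc. destruct (c_surj c) as (s & Hs & E). exists s; split; auto. split; auto. exists c; auto.
Qed.

Lemma ginv_lam k : ginv (lam k) = k.
Proof.
  unfold ginv. transitivity (ijoin K (Sk T k)); [|apply Sk_join]. f_equal. apply pred_ext; intro s; split.
  - intros (Hs & c & (s' & Hs' & E) & E'). replace s with s'; auto.
    apply nu_inj; auto. apply (Sk_T k); auto. unfold fn in E'. congruence.
  - intro Hs. pose proof (Sk_T k s Hs) as HTs. split; auto. exists (Lof s HTs). split.
    + exists s; split; auto. apply (fn_Lof s HTs).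
    + apply fn_Lof.
Qed.

Lemma lam_sim k : lam (isim K k) = isim (Gamma T (Psi K)) (lam k).
Proof.
  pose proof HK as HK. pose proof HC as HC.
  assert (HS : Sk T (isim K k) = (fun z => z = isim K k)).
  { apply Sk_unique. intros s ->. apply T_test. exists k; auto. apply join_single; auto. }
  set (Z := fun z : Psi K => exists a, lam k a /\ z = proj1_sig (proj1_sig a) (@ctop (Psi K))).
  set (m := cperp (Psi K) (csup (Psi K) Z)).
  assert (Hm : proj1_sig m = isim K k).
  { unfold m. rewrite proj_perp, proj_csup by auto. unfold vee. rewrite sim_sim_sim by auto.
    assert (EW : Wp K Z = image (fun x => isim K (isim K x)) (image (fun y => imul K y (isim K (isim K (iunit K)))) (Sk T k))).
    { rewrite image_comp. apply pred_ext; intro x; split.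
      - intros (t & (a & (s & Hs & Ea) & ->) & ->). exists s; split; auto.
        rewrite Ea. change (proj1_sig (nu s (@ctop (Psi K)))) with (dot s (proj1_sig (@ctop (Psi K)))).
        rewrite (ctop_Psi K HK HC). reflexivity.
      - intros (s & Hs & ->). pose proof (Sk_T k s Hs) as HTs.
        exists (nu s (@ctop (Psi K))). split.
        + exists (Lof s HTs). split. exists s; split; auto. apply fn_Lof. 
          change (proj1_sig (proj1_sig (Lof s HTs))) with (fn (Lof s HTs)). rewrite fn_Lof. reflexivity.
        + change (proj1_sig (nu s (@ctop (Psi K)))) with (dot s (proj1_sig (@ctop (Psi K)))).
          rewrite (ctop_Psi K HK HC). reflexivity. }
    rewrite EW, K_sim2, <- K_distr, Sk_join, K_sim1, K_runit by auto. reflexivity. }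
  assert (Hnu : nu (isim K k) = pi_ m).
  { apply functional_extensionality; intro v. apply sig_eq. rewrite (pi_Psi K HK HC m v). rewrite Hm.
    simpl. unfold dot. pose proof (K_sim4 K HK (isim K k) (proj1_sig v)) as E.
    rewrite sim_sim_sim in E by auto. exact E. }
  unfold lam, lambda. rewrite HS. apply pred_ext; intro c. simpl. split.
  - intros (s & -> & E). rewrite E, Hnu. reflexivity.
  - intro E. exists (isim K k). split; auto. rewrite Hnu. exact E.
Qed.

Lemma lam_morph : IDA_morph lam.
Proof.
  pose proof HK as HK.
  constructor.
  - intro W. unfold lam, lambda.
    rewrite (Sk_unique (ijoin K W) (fun s => exists w, W w /\ Sk T w s)).
    + apply pred_ext; intro c; simpl; split.
      * intros (s & (w & Hw & Hs) & E). exists (fun c => exists s, Sk T w s /\ proj1_sig (proj1_sig c) = nu s).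
        split; [exists w; auto | exists s; auto].
      * intros (A & (w & Hw & ->) & (s & Hs & E)). exists s; split; eauto.
    + intros s (w & _ & Hs). apply (Sk_T w); auto.
    + apply le_antisym; auto.
      * apply join_le; auto. intros s (w & Hw & Hs). apply le_trans with w; auto.
        apply (le_trans K HK) with (ijoin K (Sk T w)); [apply le_join; auto | rewrite Sk_join; apply le_refl; auto].
        apply le_join; auto.
      * apply join_le; auto. intros w Hw.
        apply (le_trans K HK) with (ijoin K (Sk T w)); [rewrite Sk_join; apply le_refl; auto|]. apply join_le; auto.
        intros s Hs. apply le_join; auto. exists w; auto.
  - intros k l. unfold lam, lambda.
    rewrite (Sk_unique (imul K k l) (fun z => exists a b, Sk T k a /\ Sk T l b /\ z = imul K a b)).
    + apply pred_ext; intro c; simpl; split.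
      * intros (z & (s & t & Hs & Ht & ->) & E).
        exists (Lof s (Sk_T k s Hs)), (Lof t (Sk_T l t Ht)). split; [|split].
        -- exists s; split; auto. apply fn_Lof.
        -- exists t; split; auto. apply fn_Lof.
        -- change (proj1_sig (proj1_sig c)) with (fn c).
           change (proj1_sig (proj1_sig ?x)) with (fn x). rewrite !fn_Lof. rewrite <- nu_mul. exact E.
      * intros (a & b & (s & Hs & Ea) & (t & Ht & Eb) & E).
        exists (imul K s t). split; [exists s, t; auto|].
        rewrite E, Ea, Eb, nu_mul. reflexivity.
    + intros z (a & b & Ha & Hb & ->). apply T_mul; [apply (Sk_T k) | apply (Sk_T l)]; auto.
    + rewrite join_mul, !Sk_join; auto.
  - intro k. unfold lam, lambda.
    rewrite (Sk_unique (istar K k) (image (istar K) (Sk T k))).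
    + apply pred_ext; intro c; simpl; split.
      * intros (z & (s & Hs & ->) & E). exists (Lof s (Sk_T k s Hs)). split.
        -- exists s; split; auto. apply fn_Lof.
        -- simpl. rewrite nu_star; auto. apply (Sk_T k); auto.
      * intros (a & (s & Hs & Ea) & E). exists (istar K s). split; [exists s; auto|].
        rewrite E. replace (proj1_sig a) with (mkLin (Psi K) (nu s)).
        -- apply nu_star. apply (Sk_T k); auto.
        -- rewrite (nu_mk s (Sk_T k s Hs)). apply sig_eq. simpl. symmetry; exact Ea.
    + intros z (s & Hs & ->). apply T_star. apply (Sk_T k); auto.
    + rewrite <- K_sjoin, Sk_join; auto.
  - unfold lam, lambda. rewrite (Sk_unique (iunit K) (fun z => z = iunit K)).
    + apply pred_ext; intro c; simpl; split.
      * intros (s & -> & E). rewrite E, nu_unit. reflexivity.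
      * intro E. exists (iunit K). split; auto. rewrite E, nu_unit. reflexivity.
    + intros s ->. apply T_unit.
    + apply join_single; auto.
  - apply lam_sim.
Qed.

Lemma main_K : TODA T (Gamma T (Psi K)) /\ TODA_iso (lambda T (K := K)).
Proof.
  pose proof lam_morph as Hl.
  assert (Hg : IDA_morph ginv) by (apply (inv_morph lam ginv Hl ginv_lam lam_ginv)).
  split.
  - apply (TODA_transport K (Gamma T (Psi K)) lam ginv Hl Hg lam_ginv ginv_lam T HTf HT).
  - split.
    + split; auto. exists ginv; split; [apply ginv_lam | apply lam_ginv].
    + exists ginv. split; [|split; [apply ginv_lam | apply lam_ginv]].
      split; auto. exists lam; split; [apply lam_ginv | apply ginv_lam].
Qed.

End Main.

Lemma natural (T : Tfun) (HTf : T_functor T) (HT1 : T1 T) (HT2 : T2 T)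
  (K L : IDAsig) (phi : K -> L) (Hphi : IDA_morph phi) :
  TODA T K -> TODA T L ->
  forall kinv : TestT L -> TestT K,
  (forall t, Psi_map phi (morph_sim Hphi) (kinv t) = t) ->
  forall k : K,
  Gamma_map (M := Psi K) (N := Psi L) T (Psi_map phi (morph_sim Hphi)) kinv (lambda T k)
  = lambda T (phi k).
Proof.
  intros HTK HTL kinv Hk2 k.
  assert (HKi : is_IDA K) by (destruct HTK as (H&_); exact H).
  assert (HLi : is_IDA L) by (destruct HTL as (H&_); exact H).
  assert (HS : Sk T (phi k) = image phi (Sk T k)).
  { apply (Sk_unique T HT1 L HTL).
    - intros z (s & Hs & ->). apply (HTf K L phi); auto. apply (Sk_T T HT1 K HTK k); auto.
    - rewrite <- (morph_join Hphi), (Sk_join T HT1 K HTK). reflexivity. }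
  assert (NU : forall s x, Psi_map phi (morph_sim Hphi) (nu s (kinv x)) = nu (phi s) x).
  { intros s x. apply sig_eq. simpl. unfold dot.
    rewrite !(morph_sim Hphi), (morph_mul Hphi).
    pose proof (f_equal (@proj1_sig _ _) (Hk2 x)) as E. simpl in E. rewrite E. reflexivity. }
  unfold Gamma_map, lambda. rewrite HS. apply pred_ext; intro c; split.
  - intros (a & (s & Hs & Ea) & Ec). exists (phi s). split; [exists s; auto|].
    rewrite Ec. apply functional_extensionality; intro x. rewrite Ea. apply NU.
  - intros (z & (s & Hs & ->) & Ec).
    pose proof (Sk_T T HT1 K HTK k s Hs) as HTs.
    exists (Lof T HT2 K HTK s HTs). split.
    + exists s; split; auto. apply (fn_Lof T HT2 K HTK s HTs).
    + rewrite Ec. apply functional_extensionality; intro x.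
      change (proj1_sig (proj1_sig (Lof T HT2 K HTK s HTs))) with (fn T K (Lof T HT2 K HTK s HTs)).
      rewrite fn_Lof. symmetry; apply NU.
Qed.

Theorem theorem6p3 (T : Tfun) :
  T_functor T -> T1 T -> T2 T -> T3 T ->
  (* each component lambda_K is an isomorphism in T-ODA *)
  (forall K : IDAsig, TODA T K ->
     TODA T (Gamma T (Psi K)) /\ TODA_iso (lambda T (K := K))) /\
  (* naturality:  Gamma(Psi(phi)) o lambda_K = lambda_L o phi *)
  (forall (K L : IDAsig) (phi : K -> L) (Hphi : IDA_morph phi),
     TODA T K -> TODA T L -> bijective phi ->
     forall kinv : TestT L -> TestT K,
       (forall t, kinv (Psi_map phi (morph_sim Hphi) t) = t) ->
       (forall t, Psi_map phi (morph_sim Hphi) (kinv t) = t) ->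
       forall k : K,
         Gamma_map (M := Psi K) (N := Psi L) T (Psi_map phi (morph_sim Hphi)) kinv (lambda T k)
         = lambda T (phi k)).
Proof.
  intros HTf HT1 HT2 HT3. split.
  - intros K HK. apply (main_K T HTf HT1 HT2 K HK).
  - intros K L phi Hphi HK HL _ kinv _ Hk2 k. apply (natural T HTf HT1 HT2 K L phi Hphi HK HL kinv Hk2 k).
Qed.
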